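(* Let $A$ be an integral domain and $E$ an $A$-module such that $aE=a^2E$ for each $a\in A$. Then: (1) if $E$ is torsion-free, then $E$ is divisible; (2) if $A$ is local and $E$ is finitely generated, then $E$ is semisimple; (3) if $A$ is an Archimedean valuation domain, then $E$ is an extension of a divisible module by a semisimple module (i.e. $E$ has a divisible submodule $D$ with $E/D$ semisimple).
   Context: $E$ is divisible if $sE=E$ for every non-zero $s\in A$. A valuation domain is Archimedean if its maximal ideal is its only non-zero prime ideal. *)

(* Defs.v *)
From mathcomp Require Import all_boot all_order all_algebra.
Set Implicit Arguments. Unset Strict Implicit. Unset Printing Implicit Defensive.
Import GRing.Theory.
Local Open Scope ring_scope.

Section Defs.
Variable A : idomainType.

Definition is_ideal (I : A -> Prop) : Prop :=
  I 0 /\ (forall x y, I x -> I y -> I (x + y)) /\ (forall a x, I x -> I (a * x)).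

Definition proper_ideal (I : A -> Prop) : Prop := is_ideal I /\ ~ I 1.

Definition maximal_ideal (I : A -> Prop) : Prop :=
  proper_ideal I /\
  forall J : A -> Prop, is_ideal J -> (forall x, I x -> J x) ->
    (forall x, J x <-> I x) \/ (forall x, J x).

Definition prime_ideal (I : A -> Prop) : Prop :=
  proper_ideal I /\ forall a b, I (a * b) -> I a \/ I b.

Definition local_ring : Prop :=
  exists M : A -> Prop, maximal_ideal M /\
    forall N, maximal_ideal N -> forall x, N x <-> M x.

Definition valuation_domain : Prop :=
  forall a b : A, (exists c, b = a * c) \/ (exists c, a = b * c).

Definition archimedean_valuation_domain : Prop :=
  valuation_domain /\
  forall M P : A -> Prop, maximal_ideal M -> prime_ideal P ->
    (exists x, P x /\ x <> 0) -> forall x, P x <-> M x.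

Variable E : lmodType A.

Definition scaled (a : A) : E -> Prop := fun v => exists x, v = a *: x.

Definition torsion_free : Prop :=
  forall (a : A) (x : E), a *: x = 0 -> a = 0 \/ x = 0.

Definition divisible : Prop :=
  forall s : A, s <> 0 -> forall v : E, scaled s v.

Definition finitely_generated : Prop :=
  exists s : seq E, forall v : E,
    exists c : 'I_(size s) -> A, v = \sum_(i < size s) c i *: s`_i.

Definition submodule (N : E -> Prop) : Prop :=
  N 0 /\ (forall x y, N x -> N y -> N (x + y)) /\ (forall a x, N x -> N (a *: x)).

Definition semisimple : Prop :=
  forall N, submodule N -> exists N', submodule N' /\
    (forall x, N x -> N' x -> x = 0) /\
    (forall v, exists x y, N x /\ N' y /\ v = x + y).

Definition divisible_submodule (D : E -> Prop) : Prop :=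
  forall s : A, s <> 0 -> forall v, D v -> exists x, D x /\ v = s *: x.

(* E / D is semisimple, expressed through the correspondence between
   submodules of E/D and submodules of E containing D: every submodule
   N ⊇ D has a complement N' ⊇ D with N ∩ N' = D and N + N' = E. *)
Definition quotient_semisimple (D : E -> Prop) : Prop :=
  forall N, submodule N -> (forall x, D x -> N x) ->
    exists N', submodule N' /\ (forall x, D x -> N' x) /\
    (forall x, N x -> N' x -> D x) /\
    (forall v, exists x y, N x /\ N' y /\ v = x + y).

End Defs.

(* Main.v *)
Require Import Defs.
From mathcomp Require Import all_boot all_order all_algebra.
Import GRing.Theory.
Local Open Scope ring_scope.
From mathcomp Require Import boolp classical_sets ring.
Section ZornSec.
Local Open Scope classical_set_scope.
Lemma zorn_gen (T : Type) (Q : (T -> Prop) -> Prop) (X0 : T -> Prop) :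
  Q X0 -> (exists x, X0 x) ->
  (forall F : (T -> Prop) -> Prop, (forall X, F X -> Q X) ->
     (forall X Y, F X -> F Y -> (forall x, X x -> Y x) \/ (forall x, Y x -> X x)) ->
     (exists X, F X /\ forall x, X0 x -> X x) ->
     Q (fun x => exists X, F X /\ X x)) ->
  exists A, Q A /\ (forall x, X0 x -> A x) /\
    forall B, Q B -> (forall x, A x -> B x) -> forall x, B x -> A x.
Proof.
move=> QX0 [x0 X0x0] Hch.
pose P : set (set T) := fun X => X = set0 \/ (Q X /\ forall x, X0 x -> X x).
have [|A [PA Amax]] := @Zorn_bigcup T P.
  move=> F FP Ftot.
  have [[X [FX [XQ XX0]]]|nW] := pselect (exists X, F X /\ (Q X /\ forall x, X0 x -> X x)).
  - right.
    pose F' := fun X => F X /\ (Q X /\ forall x, X0 x -> X x).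
    have -> : \bigcup_(X in F) X = (fun x => exists X, F' X /\ X x).
      apply/funext => x; apply/propext; split.
        move=> [Y FY Yx]; exists Y; split => //; split => //.
        have [Y0|] := FP Y FY; last by [].
        by rewrite Y0 in Yx.
      by move=> [Y [[FY _] Yx]]; exists Y.
    split.
      apply: Hch.
      - by move=> Y [_ []].
      - move=> Y Z [FY _] [FZ _]; have [h|h] := Ftot Y Z FY FZ; [left|right]; exact: h.
      - by exists X.
    by move=> x Xx; exists X; split => //; apply: XX0.
  - rewrite /P; left; apply/funext => x; apply/propext; split => //.
    move=> [Y FY Yx]; have [Y0|QY] := FP Y FY.
      by rewrite Y0 in Yx.
    by exfalso; apply: nW; exists Y.
have [A0|[QA AX0]] := PA.
  exfalso; apply: (Amax X0); last by right.
  rewrite A0; split; first by [].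
  by move=> /(_ x0 X0x0).
exists A; split => //; split => // B QB AB x Bx.
apply: contrapT => nAx; apply: (Amax B); last by right; split => // y /AX0 /AB.
split; first exact: AB.
by move=> BA; apply: nAx; exact: BA.
Qed.
End ZornSec.

Lemma compl_lemma (A : idomainType) (E : lmodType A) (D : E -> Prop) :
  submodule D -> (forall r : A, r \is a GRing.unit \/ forall v, D (r *: v)) ->
  quotient_semisimple D.
Proof.
move=> [D0 [DD DZ]] Hr N [N0 [ND NZ]] DN.
pose Q := fun X : E -> Prop => (submodule X /\ forall x, D x -> X x) /\
   forall x, N x -> X x -> D x.
have [|||X [[[[X0 [XD XZ]] DX] NX] [_ Xmax]]] := @zorn_gen E Q D.
- split; last by [].
  by split => //; split.
- by exists 0.
- move=> F FQ Ftot [X [FX X0X]].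
  split; first split; first split.
  + by exists X; split => //; apply: X0X.
  + split.
      move=> x y [Y [FY Yx]] [Z [FZ Zy]].
      have [h|h] := Ftot Y Z FY FZ.
        exists Z; split => //; have [[[_ [Zadd _]] _] _] := FQ Z FZ.
        by apply: Zadd => //; apply: h.
      exists Y; split => //; have [[[_ [Yadd _]] _] _] := FQ Y FY.
      by apply: Yadd => //; apply: h.
    move=> a x [Y [FY Yx]]; exists Y; split => //.
    by have [[[_ [_ YZ]] _] _] := FQ Y FY; apply: YZ.
  + by move=> x Dx; exists X; split => //; apply: X0X.
  + move=> x Nx [Y [FY Yx]]; have [_ YN] := FQ Y FY; exact: YN.
exists X; split; first by split.
split; first exact: DX.
split; first exact: NX.
move=> v; apply: contrapT => nv.
pose B := fun w => exists y r, X y /\ w = y + r *: v.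
have QB : Q B.
  split; first split; first split.
  + by exists 0, 0; rewrite scale0r addr0.
  + split.
      move=> x y [y1 [r1 [Xy1 ->]]] [y2 [r2 [Xy2 ->]]].
      exists (y1 + y2), (r1 + r2); split; first exact: XD.
      by rewrite scalerDl addrACA.
    move=> a x [y1 [r1 [Xy1 ->]]]; exists (a *: y1), (a * r1); split; first exact: XZ.
    by rewrite scalerDr scalerA.
  + by move=> x Dx; exists x, 0; rewrite scale0r addr0; split => //; apply: DX.
  + move=> w Nw [y [r [Xy ew]]].
    have [ru|rD] := Hr r.
      exfalso; apply: nv.
      exists (r^-1 *: w), (- (r^-1 *: y)); split; first exact: NZ.
      split; first by rewrite -scaleN1r; do 2 apply: (XZ).
      by rewrite ew scalerDr scalerA mulVr // scale1r addrC addrA addNr add0r.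
    apply: NX => //; rewrite ew; apply: XD => //; apply: DX; exact: rD.
have Bv : B v by exists 0, 1; rewrite scale1r add0r.
apply: nv; exists 0, v; split => //; split; last by rewrite add0r.
apply: (Xmax B QB) => // x Xx; by exists x, 0; rewrite scale0r addr0.
Qed.
Arguments compl_lemma {A E}.

Lemma nonunit_in_max (A : idomainType) (r : A) : r \isn't a GRing.unit ->
  exists I, maximal_ideal I /\ I r.
Proof.
move=> nr.
have [||| I [[[I0 [IDD IM]] I1] [X0I Imax]]] :=
  @zorn_gen A (@Defs.proper_ideal A) (fun y => exists c, y = c * r).
- split; first split; first by exists 0; rewrite mul0r.
    split.
      by move=> x y [c ->] [d ->]; exists (c + d); rewrite mulrDl.
    by move=> a x [c ->]; exists (a * c); rewrite mulrA.
  move=> [c c1]; move/negP: nr; apply; apply/unitrPr; exists c; by rewrite mulrC -c1.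
- by exists r, 1; rewrite mul1r.
- move=> F FQ Ftot [X [FX X0X]].
  split; first split.
  + by exists X; split => //; have [[]] := FQ X FX.
  + split.
      move=> x y [Y [FY Yx]] [Z [FZ Zy]].
      have [h|h] := Ftot Y Z FY FZ.
        exists Z; split => //; have [[_ [Zadd _]] _] := FQ Z FZ.
        by apply: Zadd => //; apply: h.
      exists Y; split => //; have [[_ [Yadd _]] _] := FQ Y FY.
      by apply: Yadd => //; apply: h.
    move=> a x [Y [FY Yx]]; exists Y; split => //.
    by have [[_ [_ YZ]] _] := FQ Y FY; apply: YZ.
  + move=> [Y [FY Y1]]; by have [_ h] := FQ Y FY.
exists I; split; last by apply: X0I; exists 1; rewrite mul1r.
split; first by split => //; split.
move=> J [J0 [JD JM]] IJ.
have [J1|nJ1] := pselect (J 1).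
  by right => x; rewrite -(mulr1 x); apply: JM.
left => x; split; last exact: IJ.
by apply: (Imax J) => //; split => //; split.
Qed.
Arguments nonunit_in_max {A}.

Lemma local_one_sub (A : idomainType) (M : A -> Prop) :
  maximal_ideal M -> (forall N, maximal_ideal N -> forall x, N x <-> M x) ->
  forall m, M m -> (1 - m) \is a GRing.unit.
Proof.
move=> [[[M0 [MD MM]] M1] _] Huniq m Mm.
apply: contrapT => /negP nu.
have [N [NM N1m]] := nonunit_in_max _ nu.
apply: M1; have -> : (1 : A) = (1 - m) + m by rewrite subrK.
by apply: MD => //; apply/(Huniq N NM).
Qed.
Arguments local_one_sub {A}.

Inductive spanP (A : idomainType) (E : lmodType A) : seq E -> E -> Prop :=
| sp_nil : spanP A E [::] 0
| sp_cons x l c w : spanP A E l w -> spanP A E (x :: l) (c *: x + w).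
Arguments spanP {A E}.
Arguments sp_nil {A E}.
Arguments sp_cons {A E}.

Lemma spanP_add (A : idomainType) (E : lmodType A) (l : seq E) u w :
  spanP l u -> spanP l w -> spanP l (u + w).
Proof.
move=> h; elim: h w => [|x l0 c u' hu IH] w hw.
  by inversion hw; rewrite add0r; constructor.
inversion hw; subst.
have -> : c *: x + u' + (c0 *: x + w0) = (c + c0) *: x + (u' + w0).
  by rewrite scalerDl addrACA.
by constructor; apply: IH.
Qed.

Lemma spanP_scale (A : idomainType) (E : lmodType A) (l : seq E) a u :
  spanP l u -> spanP l (a *: u).
Proof.
elim=> [|x l' c u' hu IH]; first by rewrite scaler0; constructor.
by rewrite scalerDr scalerA; constructor.
Qed.

Lemma spanP_sum (A : idomainType) (E : lmodType A) (s : seq E)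
  (c : 'I_(size s) -> A) : spanP s (\sum_(i < size s) c i *: s`_i).
Proof.
elim: s c => [|x s IH] c /=; first by rewrite big_ord0; constructor.
rewrite big_ord_recl /=; constructor.
exact: (IH (fun i => c (lift ord0 i))).
Qed.

Lemma nakayama (A : idomainType) (E : lmodType A)
  (hE : forall (a : A) (v : E), scaled a v <-> scaled (a ^+ 2) v)
  (a : A) (hu : forall c : A, (1 - a * c) \is a GRing.unit) :
  finitely_generated E -> forall v : E, a *: v = 0.
Proof.
move=> [s hs].
suff H : forall t : seq E, (forall v : E, exists w, spanP t w /\ a *: v = a *: w) ->
   forall v : E, a *: v = 0.
  apply: (H s) => v; have [c ->] := hs v; eexists; split; first exact: spanP_sum.
  by [].
elim=> [|x t IH] Ht.
  by move=> v; have [w [hw ->]] := Ht v; inversion hw; rewrite scaler0.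
apply: IH => v.
have [w0 ew0] := proj1 (hE a (a *: x)) (ex_intro _ x erefl).
have [w1 [hw1 e1]] := Ht w0.
inversion hw1; subst.
set u := 1 - a * c.
have ex : a *: x = a *: (u^-1 *: (a *: w)).
  have e3 : a *: x = (a * c) *: (a *: x) + a *: (a *: w).
    rewrite {1}ew0 expr2 -scalerA e1 scalerDr scalerDr; congr (_ + _).
    by rewrite !scalerA; congr (_ *: _); ring.
  have : u *: (a *: x) = a *: (a *: w).
    by rewrite /u scalerBl scale1r {1}e3 addrAC subrr add0r.
  move=> h; rewrite scalerA mulrC -scalerA -h scalerA mulVr ?scale1r //; exact: hu.
have [w2 [hw2 e2]] := Ht v.
inversion hw2 as [|x' t' c0 w3 hw3]; subst.
exists (c0 *: (u^-1 *: (a *: w)) + w3); split.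
  by apply: spanP_add => //; do 3 apply: spanP_scale.
by rewrite e2 !scalerDr scalerA mulrC -scalerA ex scalerA mulrC -scalerA.
Qed.
Arguments nakayama {A E}.

Lemma val_nonunit_max (A : idomainType) : valuation_domain A ->
  maximal_ideal (fun x : A => ~ (x \is a GRing.unit)).
Proof.
move=> hv.
have nonu_mul : forall a x : A, ~ (x \is a GRing.unit) -> ~ (a * x \is a GRing.unit).
  by move=> a x nx; rewrite unitrM => /andP [_].
split; first split; first split.
- by rewrite unitr0.
- split; last exact: nonu_mul.
  move=> x y nx ny; have [[c ->]|[c ->]] := hv x y.
    by rewrite -{1}(mulr1 x) -mulrDr mulrC; apply: nonu_mul.
  by rewrite -{2}(mulr1 y) -mulrDr mulrC; apply: nonu_mul.
- by apply; rewrite unitr1.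
move=> J [J0 [JD JM]] IJ.
have [[u [Ju uu]]|nu] := pselect (exists u, J u /\ u \is a GRing.unit).
  right => x; rewrite -(mulr1 x) -(mulVr uu) mulrA; exact: JM.
left => x; split; last exact: IJ.
by move=> Jx ux; apply: nu; exists x.
Qed.

Lemma radical_prime (A : idomainType) (a : A) : valuation_domain A ->
  ~ (a \is a GRing.unit) ->
  prime_ideal (fun x : A => exists n c, x ^+ n.+1 = a * c).
Proof.
move=> hv na.
have Rmul : forall b x : A, (exists n c, x ^+ n.+1 = a * c) ->
     exists n c, (b * x) ^+ n.+1 = a * c.
  move=> b x [n [c e]]; exists n, (b ^+ n.+1 * c).
  by rewrite exprMn e mulrCA.
split; first split; first split.
- by exists 0%N, 0; rewrite expr1 mulr0.
- split; last exact: Rmul.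
  move=> x y [n [c ex]] [m [d ey]]; have [[e ->]|[e ->]] := hv x y.
    have := Rmul (1 + e) x (ex_intro _ n (ex_intro _ c ex)).
    by rewrite mulrDl mul1r mulrC.
  have := Rmul (1 + e) y (ex_intro _ m (ex_intro _ d ey)).
  by rewrite mulrDl mul1r mulrC addrC.
- move=> [n [c e]]; apply: na; apply/unitrPr; exists c.
  by rewrite -e expr1n.
move=> x y [n [c e]].
have hk : (n.*2.+1).+1 = (n.+1).*2 by rewrite doubleS.
have [[f ey]|[f ex]] := hv x y.
  right; exists (n.*2.+1)%N, (c * f ^+ n.+1).
  rewrite hk -mul2n exprM expr2 {1}ey mulrAC exprMn e -mulrA //.
left; exists (n.*2.+1)%N, (c * f ^+ n.+1).
rewrite hk -mul2n exprM expr2 {1}ex mulrAC [y * x]mulrC exprMn e -mulrA //.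
Qed.

Lemma arch_div (A : idomainType) (a b : A) : archimedean_valuation_domain A ->
  a != 0 -> ~ (a \is a GRing.unit) -> ~ (b \is a GRing.unit) ->
  exists n c, b ^+ n.+1 = a * c.
Proof.
move=> [hv harch] a0 na nb.
have H := harch _ _ (@val_nonunit_max A hv) (@radical_prime A a hv na).
have Hex : exists x, (exists n c, x ^+ n.+1 = a * c) /\ x <> 0.
  exists a; split; last exact/eqP.
  by exists 0%N, 1; rewrite expr1 mulr1.
exact: (proj2 (H Hex b)).
Qed.
Arguments arch_div {A}.

Lemma scaled_pow (A : idomainType) (E : lmodType A)
  (hE : forall (a : A) (v : E), scaled a v <-> scaled (a ^+ 2) v)
  (r : A) (v : E) n : scaled r v -> scaled (r ^+ n.+1) v.
Proof.
move=> h; elim: n => [|n IH]; first by rewrite expr1.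
have [y ->] := proj1 (hE _ v) IH.
exists (r ^+ n *: y); rewrite scalerA -exprD -exprM; congr (_ *: _); congr (_ ^+ _).
by rewrite muln2 -addnn !addSn addnS.
Qed.
Arguments scaled_pow {A E}.

Lemma arch_scaled (A : idomainType) (E : lmodType A)
  (hE : forall (a : A) (v : E), scaled a v <-> scaled (a ^+ 2) v)
  (a r : A) : archimedean_valuation_domain A ->
  a != 0 -> ~ (a \is a GRing.unit) -> ~ (r \is a GRing.unit) ->
  forall v : E, scaled a (r *: v).
Proof.
move=> harch a0 na nr v.
have [n [c e]] := arch_div _ _ harch a0 na nr.
have [y ey] := scaled_pow hE _ _ n (ex_intro (fun x => r *: v = r *: x) v erefl).
by exists (c *: y); rewrite ey e scalerA.
Qed.
Arguments arch_scaled {A E}.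

Theorem proposition2p4 (A : idomainType) (E : lmodType A)
  (hE : forall (a : A) (v : E), scaled a v <-> scaled (a ^+ 2) v) :
  (torsion_free E -> divisible E) /\
  (local_ring A -> finitely_generated E -> semisimple E) /\
  (archimedean_valuation_domain A ->
     exists D : E -> Prop, submodule D /\ divisible_submodule D /\
       quotient_semisimple D).
Proof.
have zero_sub : submodule (fun x : E => x = 0).
  split => //; split; first by move=> x y -> ->; rewrite addr0.
  by move=> a x ->; rewrite scaler0.
split.
  move=> htf s s0 v.
  have [y ey] := proj1 (hE s (s *: v)) (ex_intro _ v erefl).
  have : s *: (v - s *: y) = 0 by rewrite scalerBr scalerA -expr2 ey subrr.
  move=> /htf [//|/eqP]; rewrite subr_eq0 => /eqP ->.
  by exists y.
split.
  move=> [M [MM Huniq]] hfg.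
  have Hr : forall r : A, r \is a GRing.unit \/ forall v : E, r *: v = 0.
    move=> r; have [ur|nur] := boolP (r \is a GRing.unit); first by left.
    right; apply: nakayama => // c.
    apply: (local_one_sub _ MM Huniq).
    have [N [NM Nr]] := nonunit_in_max _ nur.
    have Mr := proj1 (Huniq N NM r) Nr.
    have [[[_ [_ MMul]] _] _] := MM.
    by rewrite mulrC; apply: MMul.
  have Q := compl_lemma _ zero_sub (fun r => match Hr r with
     | or_introl u => or_introl u | or_intror h => or_intror (fun v => h v) end).
  move=> N hN; have [N0 _] := hN.
  have [N' [hN' [_ [NN' NpN']]]] := Q N hN (fun x e => ltac:(rewrite e; exact N0)).
  by exists N'; split => //; split.
move=> harch.
have [[a0 [a00 na0]]|nex] := pselect (exists a0 : A, a0 != 0 /\ ~ (a0 \is a GRing.unit)).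
  exists (scaled a0); split.
    split; first by exists 0; rewrite scaler0.
    split; first by move=> x y [x' ->] [y' ->]; exists (x' + y'); rewrite scalerDr.
    by move=> b x [x' ->]; exists (b *: x'); rewrite !scalerA mulrC.
  split.
    move=> s s0 v [w ->].
    have [us|nus] := boolP (s \is a GRing.unit).
      exists (s^-1 *: (a0 *: w)); split.
        by exists (s^-1 *: w); rewrite !scalerA mulrC.
      by rewrite scalerA mulrV // scale1r.
    have sa0 : s * a0 != 0 by rewrite mulf_neq0 //; apply/eqP.
    have nsa0 : ~ (s * a0 \is a GRing.unit) by rewrite unitrM (negbTE nus).
    have [y ey] := arch_scaled hE _ _ harch sa0 nsa0 na0 w.
    exists (a0 *: y); split; first by exists y.
    by rewrite ey scalerA.
  apply: compl_lemma.
    split; first by exists 0; rewrite scaler0.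
    split; first by move=> x y [x' ->] [y' ->]; exists (x' + y'); rewrite scalerDr.
    by move=> b x [x' ->]; exists (b *: x'); rewrite !scalerA mulrC.
  move=> r; have [ur|nur] := boolP (r \is a GRing.unit); first by left.
  right; apply: (arch_scaled hE _ _ harch) => //; exact/negP.
exists (fun x : E => x = 0); split => //.
split.
  by move=> s s0 v ->; exists 0; rewrite scaler0.
apply: compl_lemma => // r.
have [ur|nur] := boolP (r \is a GRing.unit); first by left.
right => v; have [->|r0] := eqVneq r 0; first by rewrite scale0r.
by exfalso; apply: nex; exists r; split => //; apply/negP.
Qed.
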